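(* Let $\ell$ be a commutative unital ring, $A,B$ (associative, not necessarily unital) $\ell$-algebras, and $n,r,s\geq 0$. Let $C:=B^{\mathfrak{S}_n}_r$ and let $H:A\to C^{\mathrm{sd}^sI}$ be an $\ell$-algebra homomorphism (a homotopy between the two homomorphisms $(d^0)^*\circ H,(d^1)^*\circ H:A\to C$, where $d^0,d^1:\Delta^0=\mathrm{sd}^s\Delta^0\to\mathrm{sd}^sI$ are induced by the two vertex inclusions of $I=\Delta^1$). Then there exists an $\ell$-algebra homomorphism $\widetilde{H}:A\to\widetilde{B}^{\mathfrak{S}_n}_{r+s}$ such that for $i=0,1$ \[(d^i)^*\circ\widetilde{H}=\tau\circ(d^i)^*\circ H,\] where on the left $(d^i)^*:\widetilde{B}^{\mathfrak{S}_n}_{r+s}\to B^{\mathfrak{S}_n}_{r+s}$ is induced by $\mathrm{id}\times d^i: I^n\cong I^n\times\Delta^0\to I^n\times I$, and $\tau:B^{\mathfrak{S}_n}_r\to B^{\mathfrak{S}_n}_{r+s}$ is the composite of $s$ transition maps of the directed diagram $B^{\mathfrak{S}_n}_\bullet$ (induced by the iterated last vertex map).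
   Context: $\mathbb{Z}^\Delta$ is the simplicial ring $[p]\mapsto \mathbb{Z}[t_0,\dots,t_p]/\langle 1-\sum t_i\rangle$ (an order preserving $\varphi:[p]\to[q]$ acts by $t_i\mapsto\sum_{\varphi(j)=i}t_j$). For an $\ell$-algebra $D$, $D^\Delta$ is the simplicial $\ell$-algebra $[p]\mapsto D\otimes_{\mathbb{Z}}\mathbb{Z}^{\Delta^p}$, and for a simplicial set $X$, $D^X:=\mathrm{Hom}_{\mathbb{S}}(X,D^\Delta)$ with pointwise operations. $\mathrm{sd}$ is the subdivision functor and $\gamma:\mathrm{sd}\to\mathrm{id}$ the last vertex map. For a finite simplicial set $K$ with simplicial subset $L$, $D^{(K,L)}_r:=\ker(D^{\mathrm{sd}^rK}\to D^{\mathrm{sd}^rL})$, and $D^{(K,L)}_\bullet$ is the directed diagram $D^{(K,L)}_0\to D^{(K,L)}_1\to\cdots$ with maps induced by $\gamma_{\mathrm{sd}^rK}:\mathrm{sd}^{r+1}K\to\mathrm{sd}^rK$. $I=\Delta^1$, $\partial I=\{0,1\}$, $I^n$ is the $n$-fold product ($I^0=\Delta^0$), $\partial I^n=\bigcup_j I\times\cdots\times\partial I\times\cdots\times I$ ($\partial I^0=\emptyset$). Notation: $B^{\mathfrak{S}_n}_r:=B^{(I^n,\partial I^n)}_r$ and $\widetilde{B}^{\mathfrak{S}_n}_r:=B^{(I^n\times I,\partial I^n\times I)}_r$. *)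

(* Defs.v *)
From HB Require Import structures.
From mathcomp Require Import all_boot all_order all_algebra.
From mathcomp Require Import mpoly.
From Stdlib Require Import ClassicalEpsilon.

Set Implicit Arguments.
Unset Strict Implicit.
Unset Printing Implicit Defensive.

Import GRing.Theory.

(*    All simplicial sets in the statement (I^n, I^n x I, Delta^0, I, and   *)
(*    their iterated subdivisions) are nerves of finite posets.             *)

Record fposet := FPoset {
  pcar :> finType;
  ple : rel pcar;
  ple_refl : reflexive ple;
  ple_anti : antisymmetric ple;
  ple_trans : transitive ple }.

(* order preserving maps = simplicial maps between nerves *)
Record mono (P Q : fposet) := Mono {
  mfun :> P -> Q;
  mfunP : forall x y, ple x y -> ple (mfun x) (mfun y) }.

Definition mono_id (P : fposet) : mono P P := @Mono P P id (fun _ _ h => h).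

Definition mono_comp (P Q R : fposet) (g : mono Q R) (f : mono P Q) : mono P R :=
  @Mono P R (fun x => g (f x)) (fun x y h => mfunP g (mfunP f h)).

Lemma ordP_anti q : antisymmetric (fun i j : 'I_q.+1 => (i <= j)%N).
Proof. by move=> i j /anti_leq/val_inj. Qed.
Definition ordP (q : nat) : fposet :=
  @FPoset 'I_q.+1 (fun i j => (i <= j)%N) (fun i => leqnn i) (@ordP_anti q)
    (fun j i k => @leq_trans j i k).

(* p-simplices of the nerve N P : order preserving maps [p] -> P *)
Definition simplex (P : fposet) (p : nat) :=
  {x : {ffun 'I_p.+1 -> P} | [forall i : 'I_p.+1, forall j : 'I_p.+1,
                                 (i <= j)%N ==> ple (x i) (x j)]}.

Lemma simcomp_proof (P : fposet) p q (x : simplex P q) (phi : simplex (ordP q) p) :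
  [forall i : 'I_p.+1, forall j : 'I_p.+1,
     (i <= j)%N ==> ple ([ffun k => val x (val phi k)] i)
                        ([ffun k => val x (val phi k)] j)].
Proof.
apply/forallP=> i; apply/forallP=> j; apply/implyP=> hij; rewrite !ffunE.
have /forallP/(_ i)/forallP/(_ j)/implyP/(_ hij) := valP phi.
by move=> h; have /forallP/(_ (val phi i))/forallP/(_ (val phi j))/implyP := valP x; apply.
Qed.

(* the simplicial operator phi^* of N P, for phi : [p] -> [q] *)
Definition simcomp (P : fposet) p q (x : simplex P q) (phi : simplex (ordP q) p)
  : simplex P p := Sub [ffun k => val x (val phi k)] (simcomp_proof x phi).

Lemma monocomp_proof (P Q : fposet) (g : mono P Q) p (x : simplex P p) :
  [forall i : 'I_p.+1, forall j : 'I_p.+1,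
     (i <= j)%N ==> ple ([ffun k => g (val x k)] i) ([ffun k => g (val x k)] j)].
Proof.
apply/forallP=> i; apply/forallP=> j; apply/implyP=> hij; rewrite !ffunE.
apply: mfunP.
by have /forallP/(_ i)/forallP/(_ j)/implyP := valP x; apply.
Qed.

(* the simplicial map N g : N P -> N Q on p-simplices *)
Definition monocomp (P Q : fposet) (g : mono P Q) p (x : simplex P p) : simplex Q p :=
  Sub [ffun k => g (val x k)] (monocomp_proof g x).

Lemma vertex_proof (P : fposet) (x : P) :
  [forall i : 'I_1, forall j : 'I_1,
     (i <= j)%N ==> ple ([ffun=> x] i) ([ffun=> x] j)].
Proof.
by apply/forallP=> i; apply/forallP=> j; apply/implyP=> _; rewrite !ffunE ple_refl.
Qed.
Definition vertex (P : fposet) (x : P) : simplex P 0 := Sub [ffun=> x] (vertex_proof x).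

Definition simimg (P : fposet) p (x : simplex P p) : {set P} :=
  [set val x i | i : 'I_p.+1].

(* ---- subdivision: sd (N P) = N (poset of nonempty chains of P) -------- *)
(* A nonempty chain is stored together with its (unique) maximum. *)
Definition is_chain_top (P : fposet) (ct : {set P} * P) :=
  [&& ct.2 \in ct.1, [forall x in ct.1, ple x ct.2] &
      [forall x in ct.1, forall y in ct.1, ple x y || ple y x]].

Definition sdT (P : fposet) := {ct : {set P} * P | is_chain_top ct}.

Lemma sd_anti (P : fposet) :
  antisymmetric (fun a b : sdT P => (val a).1 \subset (val b).1).
Proof.
move=> [[c t] ht] [[c' t'] ht'] /=.
rewrite -eqEsubset => /eqP ec; subst c'; apply: val_inj => /=.
case/and3P: ht => tc tmax _; case/and3P: ht' => tc' tmax' _.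
congr pair; apply: (@ple_anti P); apply/andP; split.
  by move/forall_inP: tmax'; apply.
by move/forall_inP: tmax; apply.
Qed.

Definition sd (P : fposet) : fposet :=
  @FPoset (sdT P) (fun a b => (val a).1 \subset (val b).1)
    (fun a => subxx _) (@sd_anti P) (fun b a c => @subset_trans _ _ _ _).

(* the last vertex map gamma : sd (N P) -> N P  (a chain |-> its maximum) *)
Lemma gamma_proof (P : fposet) (a b : sd P) :
  ple a b -> ple (val a).2 (val b).2.
Proof.
case: a b => [[c t] /= /and3P[tc _ _]] [[c' t'] /= /and3P[_ tmax' _]] /= sub.
by move/forall_inP: tmax'; apply; apply: (subsetP sub).
Qed.
Definition gamma (P : fposet) : mono (sd P) P :=
  @Mono (sd P) P (fun a => (val a).2) (@gamma_proof P).

Lemma sdmap_chain (P Q : fposet) (g : mono P Q) (a : sd P) :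
  is_chain_top (g @: (val a).1, g (val a).2).
Proof.
case: a => [[c t] /= /and3P[tc tmax tcmp]] /=.
apply/and3P; split; first exact: imset_f.
  apply/forall_inP=> _ /imsetP[x xc ->]; apply: mfunP.
  by move/forall_inP: tmax; apply.
apply/forall_inP=> _ /imsetP[x xc ->]; apply/forall_inP=> _ /imsetP[y yc ->].
move/forall_inP: tcmp => /(_ x xc)/forall_inP/(_ y yc)/orP[h|h].
  by rewrite mfunP.
by rewrite orbC mfunP.
Qed.
Definition sdmap_fun (P Q : fposet) (g : mono P Q) (a : sd P) : sd Q :=
  Sub (g @: (val a).1, g (val a).2) (sdmap_chain g a).
Lemma sdmap_proof (P Q : fposet) (g : mono P Q) (a b : sd P) :
  ple a b -> ple (sdmap_fun g a) (sdmap_fun g b).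
Proof. by move=> h; apply: imsetS. Qed.
Definition sdmap (P Q : fposet) (g : mono P Q) : mono (sd P) (sd Q) :=
  @Mono (sd P) (sd Q) (sdmap_fun g) (@sdmap_proof P Q g).

Lemma sdvertex_proof (P : fposet) (x : P) : is_chain_top ([set x], x).
Proof.
apply/and3P; split; first by rewrite set11.
  by apply/forall_inP=> y /set1P ->; rewrite ple_refl.
apply/forall_inP=> y /set1P ->; apply/forall_inP=> z /set1P ->.
by rewrite ple_refl.
Qed.
Definition sdvertex (P : fposet) (x : P) : sd P := Sub ([set x], x) (sdvertex_proof x).

Fixpoint sdn (s : nat) (P : fposet) : fposet :=
  match s with 0 => P | s'.+1 => sd (sdn s' P) end.

Fixpoint sdn_map (s : nat) (P Q : fposet) (g : mono P Q)
  : mono (sdn s P) (sdn s Q) :=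
  match s return mono (sdn s P) (sdn s Q) with
  | 0 => g
  | s'.+1 => sdmap (sdn_map s' g)
  end.

Fixpoint gamman (s r : nat) (P : fposet) : mono (sdn (s + r) P) (sdn r P) :=
  match s return mono (sdn (s + r) P) (sdn r P) with
  | 0 => mono_id (sdn r P)
  | s'.+1 => mono_comp (gamman s' r P) (gamma (sdn (s' + r) P))
  end.

(* A simplicial subset L of N P is encoded by the predicate on vertex sets:
   a simplex x of N P lies in L iff  Lp (simimg x).  For such L, sd L is the
   simplicial subset of N (sd P) consisting of the chains of chains whose
   largest element (= the union of the chain) is a simplex of L. *)
Fixpoint sdsub (s : nat) (P : fposet) (Lp : {set P} -> bool)
  : {set sdn s P} -> bool :=
  match s return {set sdn s P} -> bool with
  | 0 => Lp
  | s'.+1 => fun C => @sdsub s' P Lp (\bigcup_(c in C) (val c).1)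
  end.

(* iterated vertices: the unique point of sd^s (Delta^0) is iterated {.} *)
Fixpoint sdn_vertex (s : nat) (P : fposet) (x : P) : sdn s P :=
  match s return sdn s P with
  | 0 => x
  | s'.+1 => sdvertex (@sdn_vertex s' P x)
  end.

Definition unitP : fposet :=
  @FPoset unit (fun _ _ => true) (fun _ => erefl) (fun x y _ => match x, y with tt, tt => erefl end)
    (fun _ _ _ _ _ => erefl).

(* I = Delta^1 = N({0 < 1}) ; false = vertex 0, true = vertex 1 *)
Lemma Iposet_anti : antisymmetric (fun a b : bool => a ==> b).
Proof. by case; case. Qed.
Lemma Iposet_trans : transitive (fun a b : bool => a ==> b).
Proof. by case; case; case. Qed.
Definition Iposet : fposet :=
  @FPoset bool (fun a b => a ==> b) implybb Iposet_anti Iposet_trans.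

(* I^n = N({0<1}^n), the n-fold product (I^0 = Delta^0) *)
Lemma cube_refl n : reflexive (fun f g : {ffun 'I_n -> bool} => [forall j, f j ==> g j]).
Proof. by move=> f; apply/forallP=> j; rewrite implybb. Qed.
Lemma cube_anti n : antisymmetric (fun f g : {ffun 'I_n -> bool} => [forall j, f j ==> g j]).
Proof.
move=> f g /andP[/forallP h1 /forallP h2]; apply/ffunP=> j.
by move: (h1 j) (h2 j); case: (f j); case: (g j).
Qed.
Lemma cube_trans n : transitive (fun f g : {ffun 'I_n -> bool} => [forall j, f j ==> g j]).
Proof.
move=> g f h /forallP h1 /forallP h2; apply/forallP=> j.
by move: (h1 j) (h2 j); case: (f j); case: (g j); case: (h j).
Qed.
Definition cube (n : nat) : fposet :=
  @FPoset {ffun 'I_n -> bool} (fun f g => [forall j, f j ==> g j])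
    (@cube_refl n) (@cube_anti n) (@cube_trans n).

(* products of posets (the nerve preserves products) *)
Lemma prodP_refl (P Q : fposet) : reflexive (fun a b : P * Q => ple a.1 b.1 && ple a.2 b.2).
Proof. by move=> a; rewrite !ple_refl. Qed.
Lemma prodP_anti (P Q : fposet) : antisymmetric (fun a b : P * Q => ple a.1 b.1 && ple a.2 b.2).
Proof.
move=> [a1 a2] [b1 b2] /= /andP[/andP[h1 h2] /andP[h3 h4]].
by congr pair; apply: ple_anti; rewrite ?h1 ?h2 ?h3 ?h4.
Qed.
Lemma prodP_trans (P Q : fposet) : transitive (fun a b : P * Q => ple a.1 b.1 && ple a.2 b.2).
Proof.
move=> b a c /andP[h1 h2] /andP[h3 h4].
by rewrite (ple_trans h1 h3) (ple_trans h2 h4).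
Qed.
Definition prodP (P Q : fposet) : fposet :=
  @FPoset (P * Q)%type (fun a b => ple a.1 b.1 && ple a.2 b.2)
    (@prodP_refl P Q) (@prodP_anti P Q) (@prodP_trans P Q).

Definition cubeI (n : nat) : fposet := prodP (cube n) Iposet.

Definition vinc (i : bool) : mono unitP Iposet :=
  @Mono unitP Iposet (fun _ => i) (fun _ _ _ => implybb i).

Lemma idxd_proof n (i : bool) (x y : cube n) :
  ple x y -> ple ((x, i) : cubeI n) (y, i).
Proof. by move=> h; apply/andP; split; [exact: h | exact: implybb]. Qed.
Definition idxd (n : nat) (i : bool) : mono (cube n) (cubeI n) :=
  @Mono (cube n) (cubeI n) (fun x => (x, i)) (@idxd_proof n i).

(* boundary dI^n = union_j I x..x dI x..x I : a simplex lies in it iff some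
   coordinate j is constant on it (dI = {0,1} has only constant simplices) *)
Definition bdry (n : nat) (S : {set cube n}) : bool :=
  [exists j : 'I_n, [forall a in S, forall b in S, a j == b j]].

Definition bdryI (n : nat) (S : {set cubeI n}) : bool :=
  [exists j : 'I_n, [forall a in S, forall b in S, a.1 j == b.1 j]].

Local Open Scope ring_scope.

Record nalg (L : comPzRingType) := NAlg {
  ncar :> lmodType L;
  nmul : ncar -> ncar -> ncar;
  nmulA : associative nmul;
  nmulDl : left_distributive nmul +%R;
  nmulDr : right_distributive nmul +%R;
  nmulZl : forall (a : L) (x y : ncar), nmul (a *: x) y = a *: nmul x y;
  nmulZr : forall (a : L) (x y : ncar), nmul x (a *: y) = a *: nmul x y }.

(* The algebras built below (D^Delta, D^X, kernels) are described
   concretely: [rcar] is an ambient carrier, [rmem] singles out the actual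
   elements of the algebra, and the operations are the (pointwise /
   polynomial) ones.  The algebra in question is {x | rmem x} with these
   operations. *)
Record ralg (L : comPzRingType) := RAlg {
  rcar : Type;
  rmem : rcar -> Prop;
  rzero : rcar;
  radd : rcar -> rcar -> rcar;
  ropp : rcar -> rcar;
  rscale : L -> rcar -> rcar;
  rmul : rcar -> rcar -> rcar }.

Definition ralg_of (L : comPzRingType) (A : nalg L) : ralg L :=
  @RAlg L A (fun _ => True) 0 +%R -%R *:%R (@nmul L A).
Coercion ralg_of : nalg >-> ralg.

Definition is_hom (L : comPzRingType) (A : nalg L) (C : ralg L) (f : A -> rcar C) :=
  [/\ forall a, rmem (f a),
      forall a b, f (a + b) = radd (f a) (f b),
      forall (k : L) a, f (k *: a) = rscale k (f a) &
      forall a b, f (nmul a b) = rmul (f a) (f b)].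

(* 3. D^Delta_p = D (x)_Z Z[t_0..t_p]/<1 - sum t_i>.                        *)
(*    Using the ring isomorphism Z[t_0..t_p]/<1-sum t_i> = Z[t_1..t_p]      *)
(*    (t_0 |-> 1 - t_1 - ... - t_p), D^Delta_p is D[t_1..t_p]: an element   *)
(*    is its coefficient function on monomials 'X_{1..p} (variable k : 'I_p *)
(*    of 'X_{1..p} stands for t_(k+1)), required to have finite support.    *)

Section DeltaPoly.
Variables (L : comPzRingType) (D : ralg L).

Definition rsum (I : Type) (r : seq I) (P : pred I) (F : I -> rcar D) :=
  \big[@radd L D / rzero D]_(i <- r | P i) F i.

Definition rnatmul (x : rcar D) (k : nat) : rcar D := iter k (radd x) (rzero D).
Definition rintmul (x : rcar D) (z : int) : rcar D :=
  match z with Posz k => rnatmul x k | Negz k => ropp (rnatmul x k.+1) end.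

Definition polcar (p : nat) := 'X_{1..p} -> rcar D.

Definition finsupp p (f : polcar p) :=
  exists s : seq 'X_{1..p}, forall m, m \notin s -> f m = rzero D.

Definition pmem p (f : polcar p) := finsupp f /\ forall m, rmem (f m).
Definition pzero p : polcar p := fun _ => rzero D.
Definition padd p (f g : polcar p) : polcar p := fun m => radd (f m) (g m).
Definition popp p (f : polcar p) : polcar p := fun m => ropp (f m).
Definition pscale p (k : L) (f : polcar p) : polcar p := fun m => rscale k (f m).
Definition pmul p (f g : polcar p) : polcar p := fun m =>
  rsum [seq bmnm m1 | m1 <- enum {: 'X_{1..p < (mdeg m).+1}}]
       (fun m1 => (m1 <= m)%MM)
       (fun m1 => rmul (f m1) (g (m - m1)%MM)).

(* a duplicate-free list containing the support of f (if f is finitely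
   supported) *)
Definition suppseq p (f : polcar p) : seq 'X_{1..p} :=
  epsilon (inhabits [::])
    (fun s => uniq s /\ forall m, m \notin s -> f m = rzero D).

(* the generator t_j of Z^Delta^p (j : [p]) written in Z[t_1..t_p] *)
Definition tvar (p : nat) (j : 'I_p.+1) : {mpoly int[p]} :=
  if unlift ord0 j is Some k then 'X_k else 1 - \sum_(k < p) 'X_k.

Definition timg p q (phi : simplex (ordP q) p) (i : 'I_q.+1) : {mpoly int[p]} :=
  \sum_(j : 'I_p.+1 | val phi j == i) tvar j.

Definition mimg p q (phi : simplex (ordP q) p) (m : 'X_{1..q}) : {mpoly int[p]} :=
  \prod_(k < q) timg phi (lift ord0 k) ^+ m k.

Definition ppull p q (phi : simplex (ordP q) p) (f : polcar q) : polcar p :=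
  fun m' => rsum (suppseq f) predT (fun m => rintmul (f m) (mcoeff m' (mimg phi m))).

(* 4. D^X = Hom_sSet(X, D^Delta) for X = N P, and D^(K,L).                  *)

Definition fam (P : fposet) := forall p, simplex P p -> polcar p.

Definition natural (P : fposet) (f : fam P) :=
  forall p q (x : simplex P q) (phi : simplex (ordP q) p),
    f p (simcomp x phi) = ppull phi (f q x).

Definition DX (P : fposet) : ralg L :=
  @RAlg L (fam P)
    (fun f => (forall p x, pmem (f p x)) /\ natural f)
    (fun p _ => @pzero p)
    (fun f g p x => padd (f p x) (g p x))
    (fun f p x => popp (f p x))
    (fun k f p x => pscale k (f p x))
    (fun f g p x => pmul (f p x) (g p x)).

(* D^(K,L) = ker (D^K -> D^L) for K = N P and L the simplicial subset
   encoded by Lp (a simplex x is in L iff Lp (simimg x)) *)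
Definition DK (P : fposet) (Lp : {set P} -> bool) : ralg L :=
  @RAlg L (fam P)
    (fun f => @rmem L (DX P) f /\
       forall p (x : simplex P p), Lp (simimg x) -> f p x = @pzero p)
    (@rzero L (DX P)) (@radd L (DX P)) (@ropp L (DX P))
    (@rscale L (DX P)) (@rmul L (DX P)).

Definition pull (P Q : fposet) (g : mono P Q) (f : fam Q) : fam P :=
  fun p x => f p (monocomp g x).

(* D^(Delta^0) = D^Delta_0 = D: value at a vertex *)
Definition evpt (P : fposet) (f : fam P) (x : P) : rcar D :=
  f 0 (vertex x) 0%MM.

End DeltaPoly.

(* B^{S_n}_r = B^(sd^r I^n, sd^r dI^n) *)
Definition BS (L : comPzRingType) (B : ralg L) (n r : nat) : ralg L :=
  DK B (@sdsub r (cube n) (@bdry n)).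

(* tilde B^{S_n}_r = B^(sd^r (I^n x I), sd^r (dI^n x I)) *)
Definition BSt (L : comPzRingType) (B : ralg L) (n r : nat) : ralg L :=
  DK B (@sdsub r (cubeI n) (@bdryI n)).

Definition dstar (L : comPzRingType) (C : ralg L) (s : nat) (i : bool)
  (h : rcar (DX C (sdn s Iposet))) : rcar C :=
  evpt (pull (sdn_map s (vinc i)) h) (sdn_vertex s (tt : unitP)).

Definition dstarB (L : comPzRingType) (B : ralg L) (n m : nat) (i : bool)
  (f : rcar (BSt B n m)) : rcar (BS B n m) :=
  pull (sdn_map m (idxd n i)) f.

Definition tau (L : comPzRingType) (B : ralg L) (n r s : nat)
  (f : rcar (BS B n r)) : rcar (BS B n (s + r)) :=
  pull (gamman s r (cube n)) f.

(* Main.v *)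
Require Import Defs.
From HB Require Import structures.
From mathcomp Require Import all_boot all_order all_algebra.
From mathcomp Require Import mpoly.
From Stdlib Require Import ClassicalEpsilon FunctionalExtensionality.
From mathcomp Require Import zify.
Set Implicit Arguments. Unset Strict Implicit. Unset Printing Implicit Defensive.
Import GRing.Theory.

Lemma sd_val_eq (P : fposet) (a b : sd P) : (val a).1 = (val b).1 -> a = b.
Proof. by move=> e; apply: (@ple_anti (sd P)); rewrite /= e subxx. Qed.

Lemma sd_top (P : fposet) (a : sd P) : (val a).2 \in (val a).1.
Proof. by case/and3P: (valP a). Qed.

Lemma sdn_map_const k (P Q R : fposet) (f : mono P Q) (g : mono Q R) c :
  (forall x, g (f x) = c) -> forall w, sdn_map k g (sdn_map k f w) = sdn_vertex k c.
Proof.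
move=> h; elim: k => [|k IH] w //=.
apply: sd_val_eq => /=; apply/setP=> y; rewrite in_set1.
apply/imsetP/eqP => [[x /imsetP[x' _ ->] ->]|->]; first exact: IH.
exists (sdn_map k f (val w).2); first exact: imset_f (sd_top w).
by rewrite IH.
Qed.

Lemma sdn_map_id k (P Q : fposet) (f : mono P Q) (g : mono Q P) :
  (forall x, g (f x) = x) -> forall w, sdn_map k g (sdn_map k f w) = w.
Proof.
move=> h; elim: k => [|k IH] w //=.
apply: sd_val_eq => /=; rewrite -imset_comp.
rewrite (eq_imset _ (fun x => IH x)) imset_id //.
Qed.

Lemma sdn_map_vertex k (P Q : fposet) (g : mono P Q) x :
  sdn_map k g (sdn_vertex k x) = sdn_vertex k (g x).
Proof.
elim: k => [|k IH] //=; apply: sd_val_eq => /=.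
by rewrite imset_set1 IH.
Qed.

Fixpoint lastv (k : nat) (P : fposet) : mono (sdn k P) P :=
  match k return mono (sdn k P) P with
  | 0 => mono_id P
  | k'.+1 => mono_comp (lastv k' P) (gamma (sdn k' P)) end.

Fixpoint Gm (s r : nat) (P : fposet) : mono (sdn (s + r) P) (sdn s P) :=
  match s return mono (sdn (s + r) P) (sdn s P) with
  | 0 => lastv r P
  | s'.+1 => sdmap (Gm s' r P) end.

Lemma lastv_vertex k P x : lastv k P (sdn_vertex k x) = x.
Proof. by elim: k => [|k IH] //=. Qed.

Lemma Gm_vertex s r P x : Gm s r P (sdn_vertex (s + r) x) = sdn_vertex s x.
Proof.
elim: s => [|s IH] /=; first exact: lastv_vertex.
by apply: sd_val_eq => /=; rewrite imset_set1 IH.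
Qed.

Definition dclosed (P : fposet) (Lp : {set P} -> bool) :=
  forall T U : {set P}, T \subset U -> Lp U -> Lp T.

Lemma sdsub_mono k (P : fposet) (Lp : {set P} -> bool) :
  dclosed Lp -> forall T U : {set sdn k P}, T \subset U -> @sdsub k P Lp U -> @sdsub k P Lp T.
Proof.
move=> h; elim: k => [|k IH] //= T U sub; apply: IH.
apply/bigcupsP => c cT; exact: (bigcup_sup c (subsetP sub c cT)).
Qed.

Lemma bdry_dc n : dclosed (@bdry n).
Proof.
move=> T U sub /existsP[j /forall_inP h]; apply/existsP; exists j.
apply/forall_inP => a aT; apply/forall_inP => b bT.
by move/forall_inP: (h a (subsetP sub a aT)); apply; apply: (subsetP sub).
Qed.

Lemma pr1m_proof n (a b : cubeI n) : ple a b -> ple (a.1 : cube n) b.1.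
Proof. by case/andP. Qed.
Definition pr1m n : mono (cubeI n) (cube n) := Mono (@pr1m_proof n).
Lemma pr2m_proof n (a b : cubeI n) : ple a b -> ple (a.2 : Iposet) b.2.
Proof. by case/andP. Qed.
Definition pr2m n : mono (cubeI n) Iposet := Mono (@pr2m_proof n).

Lemma sdsub_pr1 k n (S : {set sdn k (cubeI n)}) :
  @sdsub k (cubeI n) (@bdryI n) S ->
  @sdsub k (cube n) (@bdry n) (sdn_map k (pr1m n) @: S).
Proof.
elim: k S => [|k IH] S /=.
  case/existsP=> j /forall_inP h; apply/existsP; exists j.
  apply/forall_inP => _ /imsetP[a aS ->]; apply/forall_inP => _ /imsetP[b bS ->].
  by move/forall_inP: (h a aS); apply.
move=> /IH h. apply: (@sdsub_mono k _ _ (@bdry_dc n) _ _ _ h).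
apply/bigcupsP => _ /imsetP[c cS ->] /=.
by apply: imsetS; apply: (bigcup_sup c cS).
Qed.

Lemma sdsub_gamman s r (P : fposet) (Lp : {set P} -> bool) : dclosed Lp ->
  forall S, @sdsub (s + r) P Lp S -> @sdsub r P Lp (gamman s r P @: S).
Proof.
move=> dc; elim: s => [|s IH] S /= hS.
  apply: (@sdsub_mono r _ _ dc _ _ _ hS); apply/subsetP => _ /imsetP[x xS ->] //.
have h2 : @sdsub (s + r) P Lp (gamma (sdn (s + r) P) @: S).
  apply: (@sdsub_mono (s + r) _ _ dc _ _ _ hS); apply/subsetP => _ /imsetP[c cS ->].
  by apply/bigcupP; exists c => //; exact: sd_top.
apply: (@sdsub_mono r _ _ dc _ _ _ (IH _ h2)).
apply/subsetP => _ /imsetP[x xS ->]; apply: imset_f; exact: (imset_f (gamma (sdn (s + r) P)) xS).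
Qed.

Lemma simimg_mono (P Q : fposet) (g : mono P Q) p (x : simplex P p) :
  simimg (monocomp g x) = g @: simimg x.
Proof.
rewrite /simimg -imset_comp; apply: eq_imset => i /=; by rewrite ffunE.
Qed.

Local Open Scope ring_scope.

Section SumLemmas.
Variable V : zmodType.

Lemma sum_cover (T : eqType) (s1 s2 : seq T) (G : T -> V) :
  uniq s1 -> uniq s2 -> (forall x, x \notin s1 -> G x = 0) ->
  (forall x, x \notin s2 -> G x = 0) ->
  \sum_(x <- s1) G x = \sum_(x <- s2) G x.
Proof.
move=> u1 u2 h1 h2.
have E1 : \sum_(i <- s1 | i \notin s2) G i = 0 by rewrite big1.
have E2 : \sum_(i <- s2 | i \notin s1) G i = 0 by rewrite big1.
rewrite (bigID (mem s2)) /= E1 addr0.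
rewrite [RHS](bigID (mem s1)) /= E2 addr0.
rewrite -[LHS]big_filter -[RHS]big_filter.
apply: perm_big; apply: uniq_perm; rewrite ?filter_uniq //.
by move=> x; rewrite !mem_filter andbC.
Qed.
Lemma sum_pred1 (T : eqType) (s : seq T) e (G : T -> V) : uniq s ->
  \sum_(w <- s) (if e == w then G w else 0) = if e \in s then G e else 0.
Proof.
elim: s => [|x s IH]; first by rewrite big_nil.
rewrite cons_uniq big_cons in_cons => /andP[xs us]; rewrite IH //.
case: eqP => [->|ne] /=; first by rewrite (negPf xs) addr0.
by rewrite add0r.
Qed.

Lemma sum_if b (I : Type) (r : seq I) (F : I -> V) :
  (if b then \sum_(i <- r) F i else 0) = \sum_(i <- r) (if b then F i else 0).
Proof. by case: b => //; rewrite big1. Qed.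

Lemma exch1 (I J K : Type) (ri : seq I) (rj : seq J) (rk : seq K) F :
  \sum_(i <- ri) \sum_(j <- rj) \sum_(k <- rk) (F i j k : V) =
  \sum_(k <- rk) \sum_(i <- ri) \sum_(j <- rj) F i j k.
Proof.
transitivity (\sum_(i <- ri) \sum_(k <- rk) \sum_(j <- rj) (F i j k : V)).
  by apply: eq_bigr => i _; exact: exchange_big.
exact: exchange_big.
Qed.

End SumLemmas.

Section Conv.
Variable (p : nat).
Implicit Types (m a b : 'X_{1..p}).

Definition U (N : nat) : seq 'X_{1..p} := [seq bmnm x | x <- enum {: 'X_{1..p < N}}].

Lemma U_uniq N : uniq (U N).
Proof. rewrite map_inj_uniq ?enum_uniq //; exact: val_inj. Qed.

Lemma mem_U N m : (m \in U N) = (mdeg m < N)%N.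
Proof.
apply/mapP/idP => [[b _ ->]|h]; first exact: bmdeg.
by exists (@BMultinom p N m h); rewrite ?mem_enum.
Qed.

Lemma lem_mdeg a m : (a <= m)%MM -> (mdeg a <= mdeg m)%N.
Proof. move/mnm_lepP=> h; rewrite !mdegE; apply: leq_sum => i _; exact: h. Qed.

Lemma addm_eq_sub a b m : ((a + b)%MM == m) = (a <= m)%MM && ((m - a)%MM == b).
Proof.
apply/eqP/andP => [<-|[am /eqP <-]]; last by rewrite addmC submK.
by rewrite lem_addr; split => //; rewrite addmC addmK.
Qed.

Variable V : zmodType.

Definition conv (F : 'X_{1..p} -> 'X_{1..p} -> V) m :=
  \sum_(m1 <- U (mdeg m).+1 | (m1 <= m)%MM) F m1 (m - m1)%MM.

Lemma conv_pairs N F m : (mdeg m < N)%N ->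
  conv F m = \sum_(a <- U N) \sum_(b <- U N | (a + b == m)%MM) F a b.
Proof.
move=> hN; rewrite /conv big_mkcond /=.
transitivity (\sum_(a <- U N) if (a <= m)%MM then F a (m - a)%MM else 0).
  apply: sum_cover; rewrite ?U_uniq // => a; rewrite mem_U => h;
    case: ifP => // /lem_mdeg ha; exfalso; move: h.
    by rewrite ltnS ha.
  by rewrite (leq_ltn_trans ha hN).
apply: eq_bigr => a _; case: ifP => am.
  rewrite (eq_bigl (fun b => (m - a)%MM == b)); last first.
    by move=> b; rewrite addm_eq_sub am.
  rewrite big_mkcond sum_pred1 ?U_uniq // mem_U.
  by rewrite (leq_ltn_trans (mdegB m a) hN).
by rewrite big1 // => b; rewrite addm_eq_sub am.
Qed.

Lemma conv_pairsN N F m :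
  (forall a b, (N <= mdeg a)%N || (N <= mdeg b)%N -> F a b = 0) ->
  conv F m = \sum_(a <- U N) \sum_(b <- U N | (a + b == m)%MM) F a b.
Proof.
move=> hF; rewrite (@conv_pairs (mdeg m).+1) //.
have E : forall a, \sum_(b <- U (mdeg m).+1 | (a + b == m)%MM) F a b =
                   \sum_(b <- U N | (a + b == m)%MM) F a b.
  move=> a; rewrite [LHS]big_mkcond [RHS]big_mkcond; apply: sum_cover; rewrite ?U_uniq //.
    move=> b; rewrite mem_U; case: eqP => // <-; rewrite mdegD ltnS.
    by rewrite leq_addl.
  move=> b; rewrite mem_U -leqNgt => hb; case: ifP => // _; apply: hF.
  by rewrite hb orbT.
rewrite (eq_bigr _ (fun a _ => E a)); apply: sum_cover; rewrite ?U_uniq //.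
  move=> a; rewrite mem_U => ha; rewrite big1 // => b /eqP e; exfalso.
  by move: ha; rewrite -e mdegD ltnS leq_addr.
move=> a; rewrite mem_U -leqNgt => ha; rewrite big1 // => b _; apply: hF.
by rewrite ha.
Qed.


Lemma ifand (T : Type) (x0 : T) (a b : bool) x :
  (if a && b then x else x0) = if a then (if b then x else x0) else x0.
Proof. by case: a. Qed.

Lemma collapse2 (s : seq 'X_{1..p}) e1 e2 (G : V) : uniq s ->
  \sum_(m1 <- s) \sum_(m2 <- s) (if (e1 == m1) && (e2 == m2) then G else 0) =
  if (e1 \in s) && (e2 \in s) then G else 0.
Proof.
move=> us.
transitivity (\sum_(m1 <- s) if e1 == m1 then (if e2 \in s then G else 0) else 0).
  apply: eq_bigr => m1 _; case: (e1 == m1) => /=.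
    by rewrite (@sum_pred1 _ _ s e2 (fun _ => G)).
  by rewrite big1.
by rewrite (@sum_pred1 _ _ s e1 (fun _ => if e2 \in s then G else 0)) //; case: (e1 \in s).
Qed.

Lemma conv3 (K : 'X_{1..p} -> 'X_{1..p} -> 'X_{1..p} -> 'X_{1..p} -> V) m :
  conv (fun m1 m2 => conv (fun u v => conv (fun c d => K u v c d) m2) m1) m =
  \sum_(u <- U (mdeg m).+1) \sum_(v <- U (mdeg m).+1)
  \sum_(c <- U (mdeg m).+1) \sum_(d <- U (mdeg m).+1)
     (if (u + v + (c + d) == m)%MM then K u v c d else 0).
Proof.
set s := U (mdeg m).+1.
have us : uniq s by exact: U_uniq.
rewrite (@conv_pairs (mdeg m).+1) //.
have E : forall m1 m2,
  (if (m1 + m2 == m)%MM then conv (fun u v => conv (fun c d => K u v c d) m2) m1 else 0)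
  = \sum_(u <- s) \sum_(v <- s) \sum_(c <- s) \sum_(d <- s)
     (if (m1 + m2 == m)%MM && (((u + v)%MM == m1) && ((c + d)%MM == m2)) then K u v c d else 0).
  move=> m1 m2; case: eqP => e; last first.
    by rewrite big1 // => u _; rewrite big1 // => v _; rewrite big1 // => c _; rewrite big1.
  have h1 : (mdeg m1 < (mdeg m).+1)%N by rewrite ltnS -e mdegD leq_addr.
  have h2 : (mdeg m2 < (mdeg m).+1)%N by rewrite ltnS -e mdegD leq_addl.
  rewrite (conv_pairs _ h1); apply: eq_bigr => u _.
  rewrite big_mkcond; apply: eq_bigr => v _ /=.
  rewrite (conv_pairs _ h2) sum_if; apply: eq_bigr => c _.
  rewrite big_mkcond sum_if; apply: eq_bigr => d _ /=.
  by rewrite ifand.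
transitivity (\sum_(m1 <- s) \sum_(m2 <- s) \sum_(u <- s) \sum_(v <- s) \sum_(c <- s) \sum_(d <- s)
     (if (m1 + m2 == m)%MM && (((u + v)%MM == m1) && ((c + d)%MM == m2)) then K u v c d else 0)).
  apply: eq_bigr => m1 _; rewrite big_mkcond; apply: eq_bigr => m2 _; exact: E.
rewrite [LHS]exch1; apply: eq_bigr => u _.
rewrite [LHS]exch1; apply: eq_bigr => v _.
rewrite [LHS]exch1; apply: eq_bigr => c _.
rewrite [LHS]exch1; apply: eq_bigr => d _.
transitivity (\sum_(m1 <- s) \sum_(m2 <- s)
   (if ((u + v)%MM == m1) && ((c + d)%MM == m2) then
      (if (u + v + (c + d) == m)%MM then K u v c d else 0) else 0)).
  apply: eq_bigr => m1 _; apply: eq_bigr => m2 _.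
  case: ((u + v)%MM =P m1) => [<-|]; case: ((c + d)%MM =P m2) => [<-|]; by rewrite ?eqxx ?andbT ?andbF.
rewrite collapse2 //; case: eqP => e; last by case: ifP.
move: (mdegD (u + v)%MM (c + d)%MM); rewrite e => hd.
by rewrite /s !mem_U !ltnS hd leq_addr leq_addl.
Qed.

End Conv.

Lemma coefM_conv p (P Q : {mpoly int[p]}) (m : 'X_{1..p}) :
  (P * Q)@_m = conv (fun a b => P@_a * Q@_b) m.
Proof.
rewrite mcoeffM (conv_pairs _ (ltnSn _)) /U big_map big_enum /=.
symmetry; under eq_bigr => i _ do rewrite big_map big_enum_cond.
by rewrite pair_big_dep; apply: eq_bigl => k; rewrite eq_sym.
Qed.

Lemma mimgD p q (phi : simplex (ordP q) p) (u v : 'X_{1..q}) :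
  mimg phi (u + v)%MM = mimg phi u * mimg phi v.
Proof.
by rewrite /mimg -big_split /=; apply: eq_bigr => k _; rewrite mnmDE exprD.
Qed.

Lemma addmACA q (a b c d : 'X_{1..q}) : (a + b + (c + d) = a + c + (b + d))%MM.
Proof. by apply/mnmP => i; rewrite !mnmDE addnACA. Qed.

Lemma seq_bound (q : nat) (l : seq 'X_{1..q}) :
  exists N, forall m, (N <= mdeg m)%N -> m \notin l.
Proof.
elim: l => [|x l [N hN]]; first by exists 0%N.
exists (maxn (mdeg x).+1 N) => m; rewrite geq_max => /andP[h1 h2].
rewrite in_cons negb_or hN // andbT; apply/eqP => e; move: h1; by rewrite e ltnn.
Qed.

Lemma bound_list (T : eqType) (l : seq T) (Pb : T -> nat -> Prop) :
  (forall t N N', (N <= N')%N -> Pb t N -> Pb t N') ->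
  (forall t, t \in l -> exists N, Pb t N) -> exists N, forall t, t \in l -> Pb t N.
Proof.
move=> mono; elim: l => [|x l IH] h; first by exists 0%N.
have [N1 h1] := h x (mem_head _ _).
have [N2 h2] : exists N, forall t, t \in l -> Pb t N.
  by apply: IH => t tl; apply: h; rewrite in_cons tl orbT.
exists (maxn N1 N2) => t; rewrite in_cons => /orP[/eqP->|tl].
  by apply: mono h1; rewrite leq_maxl.
by apply: mono (h2 t tl); rewrite leq_maxr.
Qed.

Lemma finsupp_bound (L : comPzRingType) (D : ralg L) q (f : polcar D q) :
  finsupp f -> exists N, forall m, (N <= mdeg m)%N -> f m = rzero D.
Proof.
case=> l hl; have [N hN] := seq_bound l; exists N => m /hN; exact: hl.
Qed.

Section Alg.
Variables (L : comPzRingType) (B : nalg L).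

Lemma nmul0l (y : B) : nmul 0 y = 0.
Proof. by apply: (@addrI _ (nmul 0 y)); rewrite -nmulDl !addr0. Qed.
Lemma nmul0r (y : B) : nmul y 0 = 0.
Proof. by apply: (@addrI _ (nmul y 0)); rewrite -nmulDr !addr0. Qed.

Lemma nmul_suml (I : Type) (rr : seq I) (P : pred I) (F : I -> B) y :
  nmul (\sum_(i <- rr | P i) F i) y = \sum_(i <- rr | P i) nmul (F i) y.
Proof. by elim/big_rec2: _ => [|i a b _ <-]; rewrite ?nmul0l ?nmulDl. Qed.
Lemma nmul_sumr (I : Type) (rr : seq I) (P : pred I) (F : I -> B) y :
  nmul y (\sum_(i <- rr | P i) F i) = \sum_(i <- rr | P i) nmul y (F i).
Proof. by elim/big_rec2: _ => [|i a b _ <-]; rewrite ?nmul0r ?nmulDr. Qed.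

Lemma rnatmulE (x : B) k : @rnatmul L B x k = x *+ k.
Proof. by elim: k => [|k IH] //=; rewrite IH mulrS. Qed.
Lemma rintmulE (x : B) z : @rintmul L B x z = x *~ z.
Proof. by case: z => k; rewrite /rintmul rnatmulE. Qed.

Section Ev.
Variables (P : fposet) (Lp : {set P} -> bool).
Notation E := (DK B Lp).

Lemma evbig (I : Type) (rr : seq I) (Pr : pred I) (G : I -> rcar E) p x m :
  (@rsum L E I rr Pr G) p x m = \sum_(i <- rr | Pr i) G i p x m.
Proof.
rewrite /rsum; elim: rr => [|i rr IH]; rewrite ?big_nil ?big_cons //.
by case: (Pr i) => //=; rewrite /padd IH.
Qed.

Lemma evnat (c : rcar E) k p x m : (@rnatmul L E c k) p x m = c p x m *+ k.
Proof. by elim: k => [|k IH] //=; rewrite /padd IH mulrS. Qed.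

Lemma evint (c : rcar E) z p x m : (@rintmul L E c z) p x m = c p x m *~ z.
Proof. case: z => k; first exact: evnat. by transitivity (- (@rnatmul L (DK B Lp) c k.+1 p x m)); rewrite // evnat. Qed.
End Ev.
End Alg.


Lemma suppseq_spec (L : comPzRingType) (D : ralg L) q (f : polcar D q) :
  finsupp f -> uniq (suppseq f) /\ forall m, m \notin suppseq f -> f m = rzero D.
Proof.
case=> l hl; rewrite /suppseq.
apply: (epsilon_spec (inhabits [::]) (fun s : seq 'X_{1..q} => uniq s /\ forall m, m \notin s -> f m = rzero D)).
exists (undup l); split; first exact: undup_uniq.
by move=> m; rewrite mem_undup; exact: hl.
Qed.

Lemma ppullE (L : comPzRingType) (B : nalg L) p q (phi : simplex (ordP q) p)
  (g : polcar B q) (sq : seq 'X_{1..q}) m :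
  finsupp g -> uniq sq -> (forall v, v \notin sq -> g v = 0) ->
  ppull phi g m = \sum_(v <- sq) g v *~ (mimg phi v)@_m.
Proof.
move=> fs us hs; have [u1 h1] := suppseq_spec fs.
rewrite /ppull /rsum; under eq_bigr => v _ do rewrite rintmulE.
apply: sum_cover => // v /=.
  by move/h1 => ->; rewrite mul0rz.
by move/hs => ->; rewrite mul0rz.
Qed.

Lemma monocomp_simcomp (P Q : fposet) (g : mono P Q) p q (z : simplex P q)
  (phi : simplex (ordP q) p) :
  monocomp g (simcomp z phi) = simcomp (monocomp g z) phi.
Proof. by apply: val_inj; apply/ffunP => k; rewrite /= !ffunE. Qed.

Lemma mdeg_subK p (a m : 'X_{1..p}) : (a <= m)%MM -> (mdeg (m - a) + mdeg a)%N = mdeg m.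
Proof. by move=> h; rewrite -mdegD submK. Qed.

Lemma bang_proof p : [forall i : 'I_p.+1, forall j : 'I_p.+1,
  (i <= j)%N ==> ple ([ffun=> (ord0 : ordP 0)] i) ([ffun=> (ord0 : ordP 0)] j)].
Proof. by apply/forallP => i; apply/forallP => j; apply/implyP => _; rewrite !ffunE. Qed.
Definition bang p : simplex (ordP 0) p := Sub [ffun=> (ord0 : ordP 0)] (bang_proof p).

Lemma fextP (L : comPzRingType) (B : nalg L) (P : fposet) (f g : fam B P) :
  (forall p z m, f p z m = g p z m) -> f = g.
Proof.
move=> h; apply: functional_extensionality_dep => p.
apply: functional_extensionality => z; apply: functional_extensionality => m; exact: h.
Qed.

Section Main.

Variables (L : comPzRingType) (B : nalg L) (n r s : nat).
Notation C := (BS B n r).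
Notation X := (sdn r (cube n)).
Notation Y := (sdn s Iposet).
Notation Z := (sdn (s + r) (cubeI n)).

Definition phi1 : mono Z X := mono_comp (gamman s r (cube n)) (sdn_map (s + r) (pr1m n)).
Definition phi2 : mono Z Y := mono_comp (Gm s r Iposet) (sdn_map (s + r) (pr2m n)).

Definition Htf (h : rcar (DX C Y)) : rcar (BSt B n (s + r)) :=
  fun p z m => conv (fun m1 m2 => (h p (monocomp phi2 z) m1 p (monocomp phi1 z) m2 : B)) m.

Lemma fext3 (f g : rcar (BSt B n (s + r))) :
  (forall p z m, f p z m = g p z m) -> f = g.
Proof.
move=> h; apply: functional_extensionality_dep => p.
apply: functional_extensionality => z; apply: functional_extensionality => m; exact: h.
Qed.

Lemma Htf_add h1 h2 :
  Htf (@radd L (DX C Y) h1 h2) = @radd L (BSt B n (s + r)) (Htf h1) (Htf h2).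
Proof.
apply: fext3 => p z m; rewrite /Htf /= /padd /= /conv -big_split /=.
by apply: eq_bigr.
Qed.

Lemma Htf_scale k h :
  Htf (@rscale L (DX C Y) k h) = @rscale L (BSt B n (s + r)) k (Htf h).
Proof.
apply: fext3 => p z m; rewrite /Htf /= /pscale /= /conv scaler_sumr /=.
by apply: eq_bigr.
Qed.


Lemma conv_nmull p (F : 'X_{1..p} -> 'X_{1..p} -> B) m y :
  nmul (conv F m) y = conv (fun a b => nmul (F a b) y) m.
Proof. by rewrite /conv nmul_suml. Qed.
Lemma conv_nmulr p (F : 'X_{1..p} -> 'X_{1..p} -> B) m y :
  nmul y (conv F m) = conv (fun a b => nmul y (F a b)) m.
Proof. by rewrite /conv nmul_sumr. Qed.

Lemma Htf_mul h1 h2 :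
  Htf (@rmul L (DX C Y) h1 h2) = @rmul L (BSt B n (s + r)) (Htf h1) (Htf h2).
Proof.
apply: fext3 => p z m.
set x := monocomp phi1 z; set y := monocomp phi2 z.
pose f1 u c := (h1 p y u p x c : B); pose f2 u c := (h2 p y u p x c : B).
have EL : forall m1 m2, (@rmul L (DX C Y) h1 h2 p y m1 p x m2 : B) =
    conv (fun u v => conv (fun c d => nmul (f1 u c) (f2 v d)) m2) m1.
  move=> m1 m2; rewrite [LHS]/= /pmul evbig; exact: eq_bigr.
transitivity (conv (fun m1 m2 => conv (fun u v => conv (fun c d => nmul (f1 u c) (f2 v d)) m2) m1) m).
  rewrite /Htf -/x -/y /conv; apply: eq_bigr => m1 _; exact: EL.
transitivity (conv (fun w w' => conv (fun u c => conv (fun v d => nmul (f1 u c) (f2 v d)) w') w) m); last first.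
  rewrite [RHS]/= /pmul /=; apply: eq_bigr => w _.
  rewrite /Htf -/x -/y conv_nmull; apply: eq_bigr => u _.
  by rewrite conv_nmulr.
rewrite !conv3; apply: eq_bigr => u _; rewrite [LHS]exchange_big.
apply: eq_bigr => c _; apply: eq_bigr => v _; apply: eq_bigr => d _.
by rewrite addmACA.
Qed.


Lemma Fbound (h : rcar (DX C Y)) : rmem h -> forall p (y : simplex Y p) (x : simplex X p),
  exists N, (forall u, (N <= mdeg u)%N -> h p y u = rzero C) /\
    (forall u v, (N <= mdeg u)%N || (N <= mdeg v)%N -> (h p y u p x v : B) = 0).
Proof.
move=> [hp hn] p y x; have [hfs hcm] := hp p y.
have [N0 hN0] := finsupp_bound hfs.
pose Pb u N := forall v, (N <= mdeg v)%N -> (h p y u p x v : B) = 0.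
have mono : forall t N N', (N <= N')%N -> Pb t N -> Pb t N'.
  by move=> t N N' le hh v hv; apply: hh; exact: leq_trans le hv.
have ex : forall t, t \in U p N0 -> exists N, Pb t N.
  move=> u _; have [[hpm _] _] := hcm u; have [fs _] := hpm p x.
  by have [N hN] := finsupp_bound fs; exists N => v /hN.
have [N1 hN1] := bound_list mono ex.
exists (maxn N0 N1); split.
  by move=> u hu; apply: hN0; exact: leq_trans (leq_maxl _ _) hu.
move=> u v /orP[hu|hv].
  by rewrite hN0 ?(leq_trans (leq_maxl _ _) hu).
case: (boolP (u \in U p N0)) => [uin|].
  by apply: (hN1 u uin); exact: leq_trans (leq_maxr _ _) hv.
by rewrite mem_U -leqNgt => hu; rewrite hN0.
Qed.

Lemma conv_zero p (F : 'X_{1..p} -> 'X_{1..p} -> B) N m :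
  (forall a b, (N <= mdeg a)%N || (N <= mdeg b)%N -> F a b = 0) ->
  (N + N <= mdeg m)%N -> conv F m = 0.
Proof.
move=> hF hm; rewrite /conv big1 // => a am; apply: hF.
move: (mdeg_subK am) => e; apply/orP; lia.
Qed.

Lemma Htf_nat h : rmem h -> forall p q (z : simplex Z q) (phi : simplex (ordP q) p),
  @Htf h p (simcomp z phi) = ppull phi (@Htf h q z).
Proof.
move=> hm; have [hp hn] := hm => p q z phi.
apply: functional_extensionality => m'.
set x := monocomp phi1 z; set y := monocomp phi2 z.
have [N [hF hf]] := Fbound hm y x.
have [hfs hcm] := hp q y.
pose f u v := (h q y u q x v : B).
pose kap (m1 : 'X_{1..p}) (u : 'X_{1..q}) := (mimg phi u)@_m1.
have EL : forall m1 m2, (h p (monocomp phi2 (simcomp z phi)) m1 p (monocomp phi1 (simcomp z phi)) m2 : B) = \sum_(u <- U q N) \sum_(v <- U q N) f u v *~ (kap m1 u * kap m2 v).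
  move=> m1 m2; rewrite !monocomp_simcomp -/x -/y (hn p q y phi).
  rewrite /ppull evbig.
  under eq_bigr => u _ do rewrite evint.
  have [u1 h1] := suppseq_spec hfs.
  transitivity (\sum_(u <- U q N) (h q y u p (simcomp x phi) m2 : B) *~ (mimg phi u)@_m1).
    apply: sum_cover => //; first exact: U_uniq.
      by move=> u /h1 ->; rewrite mul0rz.
    by move=> u; rewrite mem_U -leqNgt => /hF ->; rewrite mul0rz.
  apply: eq_bigr => u _.
  have [[hpm hnat] _] := hcm u.
  rewrite (hnat p q x phi).
  have [fs _] := hpm q x.
  rewrite (@ppullE L B p q phi _ (U q N) m2 fs (U_uniq q N)); last first.
    by move=> v; rewrite mem_U -leqNgt => hv; apply: hf; rewrite hv orbT.
  rewrite mulrz_suml; apply: eq_bigr => v _.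
  by rewrite /kap [(mimg phi u)@_m1 * _]mulrC mulrzA.
have fsH : forall w, (N + N <= mdeg w)%N -> Htf h z w = 0.
  by move=> w hw; exact: conv_zero hf hw.
have fsH' : finsupp (Htf h z).
  by exists (U q (N + N)) => w; rewrite mem_U -leqNgt => hw; exact: fsH.
rewrite (@ppullE L B p q phi _ (U q (N + N)) m' fsH' (U_uniq q (N + N))); last first.
  by move=> w; rewrite mem_U -leqNgt => hw; exact: fsH.
transitivity (conv (fun m1 m2 => \sum_(u <- U q N) \sum_(v <- U q N) f u v *~ (kap m1 u * kap m2 v)) m').
  by rewrite /Htf /conv; apply: eq_bigr => m1 _; exact: EL.
transitivity (\sum_(a <- U q N) \sum_(b <- U q N) f a b *~ kap m' (a + b)%MM).
  rewrite /conv [LHS]exchange_big; apply: eq_bigr => u _.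
  rewrite [LHS]exchange_big; apply: eq_bigr => v _.
  by rewrite /kap mimgD coefM_conv /conv mulrz_sumr.
transitivity (\sum_(w <- U q (N + N)) \sum_(a <- U q N) \sum_(b <- U q N)
   (if (a + b == w)%MM then f a b *~ kap m' w else 0)); last first.
  apply: eq_bigr => w _.
  rewrite /Htf -/x -/y (conv_pairsN _ hf) mulrz_suml; apply: eq_bigr => a _.
  by rewrite mulrz_suml [RHS]big_mkcond.
rewrite [RHS]exchange_big; apply: eq_big_seq => a; rewrite mem_U => ha.
rewrite [RHS]exchange_big; apply: eq_big_seq => b; rewrite mem_U => hb.
rewrite sum_pred1 ?U_uniq // mem_U mdegD.
have -> : (mdeg a + mdeg b < N + N)%N by lia.
by [].
Qed.

Lemma Htf_mem h : rmem h -> rmem (Htf h).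
Proof.
move=> hm; have [hp hn] := hm.
split; [split|].
- move=> p z; split => // .
  have [N [_ hf]] := Fbound hm (monocomp phi2 z) (monocomp phi1 z).
  exists (U p (N + N)) => m; rewrite mem_U -leqNgt => hmN.
  exact: conv_zero hf hmN.
- move=> p q z phi. exact: (@Htf_nat h hm p q z phi).
- move=> p z hz; apply: functional_extensionality => m.
  have hx : @sdsub r (cube n) (@bdry n) (simimg (monocomp phi1 z)).
    rewrite simimg_mono.
    have -> : phi1 @: simimg z = gamman s r (cube n) @: (sdn_map (s + r) (pr1m n) @: simimg z).
      by rewrite -imset_comp.
    exact: (sdsub_gamman (@bdry_dc n) (sdsub_pr1 hz)).
  rewrite /Htf /conv big1 // => u _.
  have [_ hcm] := hp p (monocomp phi2 z).
  by have [_ ->] := hcm u.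
Qed.


Lemma Htf_dstar h i : rmem h ->
  @dstarB L B n (s + r) i (Htf h) = @tau L B n r s (@dstar L C s i h).
Proof.
move=> hm; have [hp hn] := hm.
apply: fextP => p w m.
set vi := sdn_vertex s (i : Iposet).
have e1 : monocomp phi1 (monocomp (sdn_map (s + r) (idxd n i)) w) =
          monocomp (gamman s r (cube n)) w.
  apply: val_inj; apply/ffunP => k; rewrite /= !ffunE /=.
  by rewrite (@sdn_map_id (s + r) _ _ (idxd n i) (pr1m n)).
have e2 : monocomp phi2 (monocomp (sdn_map (s + r) (idxd n i)) w) =
          simcomp (vertex vi) (bang p).
  apply: val_inj; apply/ffunP => k; rewrite /= !ffunE /=.
  by rewrite (@sdn_map_const (s + r) _ _ _ (idxd n i) (pr2m n) i) // Gm_vertex.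
have e3 : monocomp (sdn_map s (vinc i)) (vertex (sdn_vertex s (tt : unitP))) = vertex vi.
  by apply: val_inj; apply/ffunP => k; rewrite /= !ffunE sdn_map_vertex.
rewrite /dstarB /tau /dstar /evpt /pull e3 /Htf e1 e2 (hn p 0 (vertex vi) (bang p)).
set G := h 0 (vertex vi); set x := monocomp (gamman s r (cube n)) w.
have [fs _] := hp 0 (vertex vi); have [u1 h1] := suppseq_spec fs.
have E : forall m1 m2, (@ppull L C p 0 (bang p) G m1 p x m2 : B) =
    (G 0%MM p x m2 : B) *~ (m1 == 0%MM)%:R.
  move=> m1 m2; rewrite /ppull evbig; under eq_bigr => u _ do rewrite evint.
  rewrite (@sum_cover _ _ _ [:: 0%MM]) //.
  - by rewrite big_seq1 /mimg big_ord0 mcoeff1.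
  - by move=> u /h1 hu; rewrite /G hu mul0rz.
  - by move=> u; rewrite (nvar0_mnmE u) mem_seq1 eqxx.
rewrite /conv.
transitivity (\sum_(m1 <- U p (mdeg m).+1) if (0%MM == m1) then (G 0%MM p x m : B) else 0).
  rewrite big_mkcond; apply: eq_bigr => m1 _; rewrite E.
  case: (0%MM =P m1) => [<-|ne].
    have -> : (0%MM <= m)%MM by apply/mnm_lepP => j; rewrite mnm0E.
    by rewrite subm0 eqxx mulr1z.
  by case: ifP => _ //; rewrite eq_sym (introF eqP ne) mulr0z.
by rewrite sum_pred1 ?U_uniq // mem_U mdeg0.
Qed.

End Main.

Theorem lemma3p7 (L : comPzRingType) (A B : nalg L) (n r s : nat)
  (H : A -> rcar (DX (BS B n r) (sdn s Iposet)))
  (hH : is_hom H) :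
  exists Ht : A -> rcar (BSt B n (s + r)),
    is_hom Ht /\
    forall (i : bool) (a : A),
      @dstarB L B n (s + r) i (Ht a) =
        @tau L B n r s (@dstar L (BS B n r) s i (H a)).
Proof.
case: hH => hmem hadd hscale hmul.
exists (fun a => @Htf L B n r s (H a)); split; first split.
- by move=> a; exact: Htf_mem (hmem a).
- by move=> a b; rewrite hadd; exact: Htf_add.
- by move=> k a; rewrite hscale; exact: Htf_scale.
- by move=> a b; rewrite hmul; exact: Htf_mul.
- by move=> i a; exact: Htf_dstar (hmem a).
Qed.
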